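(* Let $S$ be a finite poset with acyclic Hasse graph $\Gamma(S)$, and let $s_t$ be a terminal point of $S$ which is a Dynkin point of $S$. Then for every poset $\overrightarrow S$ on the same set with $\Gamma(\overrightarrow S)=\Gamma(S)$, the point $s_t$ is a Dynkin point of $\overrightarrow S$.
   Context: For $S=\{s_1,\dots,s_n\}$, $f_S(x)=\sum_i x_i^2+\sum_{s_i<s_j}x_ix_j$, so $\frac{\partial f_S}{\partial x_m}(x)=2x_m+\sum_{j\ne m,\ s_j\text{ comparable with }s_m}x_j$. $\Gamma(S)$ has vertex set $S$ and an edge between $s,s'$ when one covers the other. A terminal point is a vertex of degree $\le1$ in $\Gamma(S)$. $s_m$ is a Dynkin point of $S$ if there is a nonzero $d\in\mathbb Z^n$ with $0\le\frac{\partial f_S}{\partial x_m}(d)\le2$ and $\frac{\partial f_S}{\partial x_j}(d)=0$ for $j\ne m$. *)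

(* Defs.v *)
From mathcomp Require Import all_boot all_order all_algebra.
Set Implicit Arguments. Unset Strict Implicit. Unset Printing Implicit Defensive.
Import Order.TTheory GRing.Theory Num.Theory.

(* A finite poset S = {s_0,...,s_(n-1)} is encoded by its (non-strict) order
   relation [le] on the index type 'I_n. *)
Definition is_poset (n : nat) (le : rel 'I_n) : Prop :=
  [/\ reflexive le, antisymmetric le & transitive le].

Definition plt (n : nat) (le : rel 'I_n) : rel 'I_n :=
  fun i j => (i != j) && le i j.

Definition covers (n : nat) (le : rel 'I_n) : rel 'I_n :=
  fun i j => plt le i j && ~~ [exists k, plt le i k && plt le k j].

Definition hasse_adj (n : nat) (le : rel 'I_n) : rel 'I_n :=
  fun i j => covers le i j || covers le j i.

Definition hasse_acyclic (n : nat) (le : rel 'I_n) : Prop :=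
  ~ exists c : seq 'I_n, [/\ 2 < size c, uniq c & cycle (hasse_adj le) c].

Definition terminal (n : nat) (le : rel 'I_n) (t : 'I_n) : Prop :=
  #|[set j | hasse_adj le t j]| <= 1.

Definition comparable_pt (n : nat) (le : rel 'I_n) (m j : 'I_n) : bool :=
  (j != m) && (le m j || le j m).

Definition fS (n : nat) (le : rel 'I_n) (x : 'I_n -> int) : int :=
  (\sum_i x i ^+ 2 + \sum_i \sum_(j | plt le i j) x i * x j)%R.

(* partial derivative of f_S in direction m, as given:
   2 x_m + sum_{j <> m, s_j comparable with s_m} x_j *)
Definition dfS (n : nat) (le : rel 'I_n) (x : 'I_n -> int) (m : 'I_n) : int :=
  (2 * x m + \sum_(j | comparable_pt le m j) x j)%R.

Definition dynkin_point (n : nat) (le : rel 'I_n) (m : 'I_n) : Prop :=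
  exists d : {ffun 'I_n -> int},
    [/\ exists i, d i != 0%R,
        (0 <= dfS le d m <= 2)%R
      & forall j, j != m -> dfS le d j = 0%R].

(* Main.v *)
Require Import Defs.
From mathcomp Require Import all_boot all_order all_algebra.
From mathcomp Require Import zify ring lra.
Set Implicit Arguments. Unset Strict Implicit. Unset Printing Implicit Defensive.
Import Order.TTheory GRing.Theory Num.Theory.

Lemma covers_le n (le : rel 'I_n) x y : covers le x y -> le x y.
Proof. by case/andP=> /andP[]. Qed.

Lemma connect_le n (le : rel 'I_n) : is_poset le ->
  forall x y, connect (covers le) x y -> le x y.
Proof.
case=> refl _ tr x y /connectP[p]; elim: p x => [|z p IH] x /=.
  by move=> _ ->.
by case/andP=> /covers_le lxz /IH H /H; apply: tr.
Qed.

Lemma le_connect n (le : rel 'I_n) : is_poset le ->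
  forall x y, le x y -> connect (covers le) x y.
Proof.
move=> [refl anti tr].
suff H : forall N x y, #|[pred k | le x k && le k y]| <= N -> le x y ->
  connect (covers le) x y.
  by move=> x y; apply: (H _ x y (leqnn _)).
elim=> [|N IH] x y.
  move=> c lxy; move: c; rewrite leqn0 => /eqP/card0_eq/(_ x).
  by rewrite !inE refl lxy.
move=> c lxy.
have [-> | nxy] := eqVneq x y; first exact: connect0.
case cov: (covers le x y); first exact: connect1.
move: cov; rewrite /covers /plt nxy lxy /= => /negbFE/existsP[k /andP[/andP[nxk lxk] /andP[nky lky]]].
apply: (connect_trans (y := k)).
  apply: (IH) lxk; rewrite -ltnS; apply: leq_trans c; apply: proper_card.
  apply/properP; split.
    by apply/subsetP=> z; rewrite !inE => /andP[-> lzk]; rewrite (tr _ _ _ lzk lky).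
  exists y; first by rewrite !inE lxy refl.
  by rewrite !inE; apply/negP=> /andP[_ lyk]; case/negP: nky; apply/eqP/anti; rewrite lyk lky.
apply: (IH) lky; rewrite -ltnS; apply: leq_trans c; apply: proper_card.
apply/properP; split.
  by apply/subsetP=> z; rewrite !inE => /andP[lkz ->]; rewrite (tr _ _ _ lxk lkz).
exists x; first by rewrite !inE lxy refl.
by rewrite !inE; apply/negP=> /andP[lkx _]; case/negP: nxk; apply/eqP/anti; rewrite lkx lxk.
Qed.

Lemma covers_eq_le n (le le' : rel 'I_n) : is_poset le -> is_poset le' ->
  (forall x y, covers le x y = covers le' x y) -> forall x y, le x y = le' x y.
Proof.
move=> P P' E x y; apply/idP/idP => H.
  by apply: (connect_le P'); rewrite -(eq_connect E); apply: le_connect.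
by apply: (connect_le P); rewrite (eq_connect E); apply: le_connect.
Qed.


Definition side_ok n (le : rel 'I_n) (u v : 'I_n) (U : {set 'I_n}) :=
  [/\ covers le u v, u \in U, v \notin U &
      forall a b, a \in U -> b \notin U -> hasse_adj le a b -> a = u /\ b = v].

Lemma covers_asym n (le : rel 'I_n) : is_poset le -> forall x y,
  covers le x y -> covers le y x -> False.
Proof.
case=> _ anti _ x y /andP[/andP[nxy lxy] _] /andP[/andP[_ lyx] _].
by move/negP: nxy; apply; apply/eqP/anti; rewrite lxy lyx.
Qed.

Lemma side_B3 n (le : rel 'I_n) u v U : is_poset le -> side_ok le u v U ->
  forall a b, a \notin U -> b \in U -> le a b = false.
Proof.
move=> P [cuv Uu Uv HU] a b aU bU; apply/negP=> /(le_connect P)/connectP[p pth eb]; subst b.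
elim: p a aU pth bU => [|y p IH] a aU //=; first by move=> _; rewrite (negbTE aU).
case/andP=> cay pth; apply: IH pth.
apply/negP=> yU; have [ey ea] := HU y a yU aU (introT orP (or_intror cay)).
by subst; apply: (covers_asym P cuv cay).
Qed.

Lemma side_B2 n (le : rel 'I_n) u v U : is_poset le -> side_ok le u v U ->
  forall a b, a \in U -> b \notin U -> le a b = le a u && le v b.
Proof.
move=> P [cuv Uu Uv HU] a b aU bU; case: (P) => refl anti tr.
apply/idP/idP.
  move/(le_connect P)/connectP=> [p pth lst]; subst b.
  elim: p a aU pth bU => [|y p IH] a aU /=; first by move=> _; rewrite aU.
  case/andP=> cay pth lU.
  have [yU | yU] := boolP (y \in U).
    by case/andP: (IH y yU pth lU) => lyu ->; rewrite (tr _ _ _ (covers_le cay) lyu).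
  have [ea ey] := HU a y aU yU (introT orP (or_introl cay)); subst.
  by rewrite refl; apply: connect_le => //; apply/connectP; exists p.
case/andP=> lau lvb; apply: (tr _ _ _ lau); exact: (tr _ _ _ (covers_le cuv) lvb).
Qed.


Definition flip n (le : rel 'I_n) (u v : 'I_n) (U : {set 'I_n}) : rel 'I_n :=
  fun a b => if a \in U then (b \in U) && le a b
             else if b \in U then le a v && le u b else le a b.

Lemma flip_poset n (le : rel 'I_n) u v U : is_poset le -> is_poset (flip le u v U).
Proof.
case=> refl anti tr; split.
- by move=> x; rewrite /flip; case: ifP => xU; rewrite ?xU refl.
- move=> x y; rewrite /flip; case: ifP => xU; case: ifP => yU //=; rewrite ?xU ?yU /= ?andbF //; exact: anti.
- move=> y x z; rewrite /flip; case xU: (x \in U); case yU: (y \in U); case zU: (z \in U) => /= //; rewrite ?andbF //.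
  + exact: tr.
  + by case/andP=> lxv luy lyz; rewrite lxv (tr _ _ _ luy lyz).
  + by move=> lxy /andP[lyv luz]; rewrite luz (tr _ _ _ lxy lyv).
  + exact: tr.
Qed.
Lemma flip_covers n (le : rel 'I_n) u v U : is_poset le -> side_ok le u v U ->
  forall x y, covers (flip le u v U) x y =
  if (x == v) && (y == u) then true else if (x == u) && (y == v) then false
  else covers le x y.
Proof.
move=> P S; have [cuv Uu Uv HU] := S; have B3 := side_B3 P S.
have [refl anti tr] := P.
have nuv : u != v by case/andP: cuv => /andP[].
have inv : forall a, a \in U -> (a == v) = false.
  by move=> a aU; apply/eqP=> e; rewrite -e aU in Uv.
have inu : forall a, a \notin U -> (a == u) = false.
  by move=> a aU; apply/eqP=> e; rewrite e Uu in aU.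
move=> x y.
case xU: (x \in U); case yU: (y \in U).
- rewrite inv // andFb; case: ifP => [/andP[_ /eqP e]|_]; first by move: Uv; rewrite -e yU.
  rewrite /covers /plt /flip xU yU /=; congr (_ && ~~ _).
  apply/existsP/existsP => [[k Hk]|[k Hk]]; exists k; move: Hk; case kU: (k \in U) => //=.
  by rewrite andbF.
  by rewrite (B3 k y) ?kU ?yU // !andbF.
- have -> : covers (flip le u v U) x y = false by rewrite /covers /plt /flip xU yU /= andbF.
  rewrite inv // andFb; case: ifP => // H; apply/esym/negP => c.
  have [ex ey] := HU x y xU (negbT yU) (introT orP (or_introl c)).
  by rewrite ex ey !eqxx in H.
- rewrite (inu x) ?xU // andFb.
  have -> : covers le x y = false by rewrite /covers /plt (B3 x y) ?xU ?yU // andbF andFb.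
  case: ifP => [/andP[/eqP ex /eqP ey] | H].
    subst x y; rewrite /covers /plt /flip Uu (negbTE Uv) /= eq_sym nuv !refl /=.
    apply/existsP => [[k]]; case kU: (k \in U) => /=.
      case/and3P => [/andP[_ luk] nku lku].
      by case/negP: nku; apply/eqP/anti; rewrite luk lku.
    case/and4P => [/andP[nvk lvk] _ lkv _].
    by case/negP: nvk; apply/eqP/anti; rewrite lvk lkv.
  apply/negP; rewrite /covers /plt /flip xU yU /= => /andP[/andP[nxy /andP[lxv luy]] /existsP nex]; apply: nex.
  move/negbT/nandP: H => [xv|yu].
    exists v; rewrite (negbTE Uv) /=.
    rewrite xv lxv refl luy /= andbT; apply/eqP=> e; by move: Uv; rewrite e yU.
  exists u; rewrite Uu /= refl lxv luy /= (eq_sym u y) yu !andbT.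
  by apply/eqP=> e; move: Uu; rewrite -e xU.
-  rewrite (inu x) ?xU // (inu y) ?yU // andbF andFb.
  rewrite /covers /plt /flip xU yU /=; congr (_ && ~~ _).
  apply/existsP/existsP => [[k Hk]|[k Hk]]; exists k; move: Hk; case kU: (k \in U) => //=.
  by rewrite !andbF.
  by rewrite (B3 x k) ?xU ?kU // !andbF.
Qed.

Lemma flip_adj n (le : rel 'I_n) u v U : is_poset le -> side_ok le u v U ->
  forall x y, hasse_adj (flip le u v U) x y = hasse_adj le x y.
Proof.
move=> P S; have [cuv _ _ _] := S.
have nuv : u != v by case/andP: cuv => /andP[].
move=> x y; rewrite /hasse_adj !(flip_covers P S).
have [-> | xv] := eqVneq x v; have [-> | yu] := eqVneq y u;
  have [exu | xu] := eqVneq x u; have [eyv | yv] := eqVneq y v => //=;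
  subst; rewrite ?eqxx ?(negbTE nuv) ?cuv ?orbT //=.
all: by rewrite (eq_sym v u) (negbTE nuv) ?andFb.
Qed.

Open Scope ring_scope.

Definition b2z (b : bool) : int := if b then 1 else 0.

Definition coef n (le : rel 'I_n) (j k : 'I_n) : int :=
  (if k == j then 2 else 0) + b2z (comparable_pt le j k).

Lemma sum_delta n (F : 'I_n -> int) u :
  \sum_k F k * (if k == u then 1 else 0) = F u.
Proof.
rewrite (bigD1 u) //= eqxx mulr1 big1 ?addr0 // => k /negbTE ->; by rewrite mulr0.
Qed.

Lemma dfS_coef n (le : rel 'I_n) (x : 'I_n -> int) j :
  dfS le x j = \sum_k coef le j k * x k.
Proof.
rewrite /dfS /coef; apply/esym.
under eq_bigr => k _ do rewrite mulrDl.
rewrite big_split /=; congr (_ + _).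
  rewrite (bigD1 j) //= eqxx big1 ?addr0 // => k /negbTE ->; by rewrite mul0r.
rewrite [RHS]big_mkcond /=; apply: eq_bigr => k _; rewrite /b2z.
by case: ifP; rewrite ?mul1r ?mul0r.
Qed.

Lemma compC n (le : rel 'I_n) a b : comparable_pt le a b = comparable_pt le b a.
Proof. by rewrite /comparable_pt eq_sym orbC. Qed.

Lemma comp_same n (le : rel 'I_n) u v (U : {set 'I_n}) a b : (a \in U) = (b \in U) ->
  comparable_pt (flip le u v U) a b = comparable_pt le a b.
Proof.
rewrite /comparable_pt /flip => E; rewrite E.
by case: (b \in U); rewrite /= ?andbT.
Qed.

Lemma comp_cross n (le : rel 'I_n) u v (U : {set 'I_n}) a b : is_poset le -> side_ok le u v U ->
  a \in U -> b \notin U ->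
  comparable_pt le a b = le a u && le v b /\
  comparable_pt (flip le u v U) a b = le b v && le u a.
Proof.
move=> P S aU bU.
have nba : b != a by apply/eqP=> e; move: bU; rewrite e aU.
rewrite /comparable_pt /flip nba aU (negbTE bU) (side_B2 P S aU bU) (side_B3 P S bU aU).
by rewrite orbF.
Qed.
Lemma af n (le : rel 'I_n) : is_poset le -> forall a b,
  if a == b then le a b && le b a else ~~ (le a b && le b a).
Proof.
case=> refl anti _ a b; case: eqP => [->|nab]; first by rewrite refl.
by apply/negP=> /anti.
Qed.

Lemma coef_id n (le : rel 'I_n) u v U : is_poset le -> side_ok le u v U -> forall j l,
  coef (flip le u v U) j l =
  coef le j l - b2z (j \in U) * coef le u j * coef le u l
              - b2z (j \notin U) * coef le v j * coef le v l
  + coef (flip le u v U) j u * b2z (l \in U) * coef le u l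
  + coef (flip le u v U) j v * b2z (l \notin U) * coef le v l.
Proof.
move=> P S j l; have [cuv Uu Uv _] := S; have [refl anti _] := P.
have nuv : u != v by case/andP: cuv => /andP[].
case jU: (j \in U); case lU: (l \in U).
- rewrite /coef (comp_same _ _ _ (_ : (j \in U) = (l \in U))) ?jU ?lU //.
  rewrite (comp_same _ _ _ (_ : (j \in U) = (u \in U))) ?jU ?Uu //.
  rewrite /b2z /= (eq_sym u j) (compC le j u); ring.
- have [c1 c2] := comp_cross P S jU (negbT lU).
  have [c3 c4] := comp_cross P S jU Uv.
  have [c5 c6] := comp_cross P S Uu (negbT lU).
  have nlj : (l == j) = false by apply/eqP=> e; move: lU; rewrite e jU.
  have nvj : (v == j) = false by apply/eqP=> e; move: Uv; rewrite e jU.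
  have nlu : (l == u) = false by apply/eqP=> e; move: lU; rewrite e Uu.
  rewrite /coef c1 c2 c4 c5 (comp_same _ _ _ (_ : (j \in U) = (u \in U))) ?jU ?Uu //.
  rewrite /b2z /= nlj nvj nlu !refl /= /comparable_pt ?(eq_sym u j) ?(eq_sym v l).
  move: (af P j u) (af P l v).
  case: (j == u) (l == v) (le j u) (le u j) (le v l) (le l v) => [] [] [] [] [] [] //= _ _; ring.
- have [c1 c2] := comp_cross P S lU (negbT jU).
  have [c3 c4] := comp_cross P S Uu (negbT jU).
  have [c5 c6] := comp_cross P S lU Uv.
  have nlj : (l == j) = false by apply/eqP=> e; move: lU; rewrite e jU.
  have nuj : (u == j) = false by apply/eqP=> e; move: Uu; rewrite e jU.
  have nlv : (l == v) = false by apply/eqP=> e; move: lU; rewrite e (negbTE Uv).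
  rewrite /coef (compC le j l) (compC (flip le u v U) j l) c1 c2 (compC (flip le u v U) j u) c4 (compC le v l) c5.
  rewrite (comp_same _ _ _ (_ : (j \in U) = (v \in U))) ?jU ?(negbTE Uv) //.
  rewrite /b2z /= nlj nuj nlv !refl /= /comparable_pt ?(eq_sym u l) ?(eq_sym v j).
  move: (af P l u) (af P j v).
  case: (l == u) (j == v) (le l u) (le u l) (le j v) (le v j) => [] [] [] [] [] [] //= _ _; ring.
- rewrite /coef (comp_same _ _ _ (_ : (j \in U) = (l \in U))) ?jU ?lU //.
  rewrite (comp_same _ _ _ (_ : (j \in U) = (v \in U))) ?jU ?(negbTE Uv) //.
  rewrite /b2z /= (eq_sym v j) (compC le j v); ring.
Qed.
Definition Pside n (le : rel 'I_n) (w : 'I_n) (b : 'I_n -> bool) (x : 'I_n -> int) : int :=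
  \sum_l b2z (b l) * coef le w l * x l.

Definition Tvec n (le : rel 'I_n) u v (U : {set 'I_n}) (x : 'I_n -> int) : {ffun 'I_n -> int} :=
  [ffun k => x k - (if k == u then 1 else 0) * Pside le u (fun l => l \in U) x
                 - (if k == v then 1 else 0) * Pside le v (fun l => l \notin U) x].

Lemma sum_delta2 n (F : 'I_n -> int) u c :
  \sum_k F k * ((if k == u then 1 else 0) * c) = F u * c.
Proof. under eq_bigr => k _ do rewrite mulrA. by rewrite -mulr_suml sum_delta. Qed.

Lemma dfS_T n (le : rel 'I_n) u v U (x : 'I_n -> int) j :
  is_poset le -> side_ok le u v U ->
  dfS (flip le u v U) (Tvec le u v U x) j =
  dfS le x j - b2z (j \in U) * coef le u j * dfS le x u
             - b2z (j \notin U) * coef le v j * dfS le x v.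
Proof.
move=> P S; rewrite !dfS_coef.
under eq_bigr => k _ do rewrite ffunE !mulrBr.
rewrite !sumrB !sum_delta2 /Pside !mulr_sumr -!sumrB.
apply: eq_bigr => l _; rewrite (coef_id P S j l); ring.
Qed.


Lemma Tvec_nz n (le : rel 'I_n) u v U (x : 'I_n -> int) :
  side_ok le u v U -> (exists i, x i != 0) -> exists i, Tvec le u v U x i != 0.
Proof.
move=> [cuv Uu Uv _] [i xi].
have nuv : u != v by case/andP: cuv => /andP[].
case: (boolP [exists k, Tvec le u v U x k != 0]) => [/existsP //|].
rewrite negb_exists => /forallP H.
have H0 : forall k, Tvec le u v U x k = 0 by move=> k; apply/eqP; rewrite -[_ == _]negbK H.
have Hk : forall k, k != u -> k != v -> x k = 0.
  move=> k ku kv; have := H0 k; rewrite ffunE (negbTE ku) (negbTE kv) !mul0r !subr0 //.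
have Pu : Pside le u (fun l => l \in U) x = 2 * x u.
  rewrite /Pside (bigD1 u) //= big1 ?addr0.
    by rewrite Uu /b2z /coef eqxx /comparable_pt eqxx /= mul1r addr0.
  move=> k ku; have [-> | kv] := eqVneq k v; first by rewrite (negbTE Uv) /b2z !mul0r.
  by rewrite Hk // mulr0.
have Pv : Pside le v (fun l => l \notin U) x = 2 * x v.
  rewrite /Pside (bigD1 v) //= big1 ?addr0.
    by rewrite Uv /b2z /coef eqxx /comparable_pt eqxx /= mul1r addr0.
  move=> k kv; have [-> | ku] := eqVneq k u; first by rewrite Uu /b2z !mul0r.
  by rewrite Hk // mulr0.
have xu : x u = 0.
  have := H0 u; rewrite ffunE eqxx (negbTE nuv) Pu mul0r subr0 mul1r.
  by move/eqP; rewrite subr_eq0 => /eqP; lia.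
have xv : x v = 0.
  have := H0 v; rewrite ffunE eqxx eq_sym (negbTE nuv) Pv mul0r subr0 mul1r.
  by move/eqP; rewrite subr_eq0 => /eqP; lia.
case/negP: xi; apply/eqP.
have [-> // | iu] := eqVneq i u; have [-> // | iv] := eqVneq i v.
exact: Hk.
Qed.

Lemma dfS_scale n (le : rel 'I_n) (c : int) (x : 'I_n -> int) j :
  dfS le (fun k => c * x k) j = c * dfS le x j.
Proof.
rewrite !dfS_coef mulr_sumr; apply: eq_bigr => k _; ring.
Qed.

Lemma dfS_ext n (le le' : rel 'I_n) x j : (forall a b, le a b = le' a b) ->
  dfS le x j = dfS le' x j.
Proof.
move=> E; rewrite /dfS; congr (_ + _); apply: eq_bigl => k.
by rewrite /comparable_pt !E.
Qed.

Lemma dynkin_ext n (le le' : rel 'I_n) t : (forall a b, le a b = le' a b) ->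
  dynkin_point le t -> dynkin_point le' t.
Proof.
move=> E [d [nz H1 H2]]; exists d; split => //.
  by rewrite -(dfS_ext _ _ E).
by move=> j jt; rewrite -(dfS_ext _ _ E) H2.
Qed.
Lemma dfS_eqfun n (le : rel 'I_n) (x y : 'I_n -> int) j :
  (forall k, x k = y k) -> dfS le x j = dfS le y j.
Proof. by move=> E; rewrite !dfS_coef; apply: eq_bigr => k _; rewrite E. Qed.

Lemma coef_uu n (le : rel 'I_n) u : coef le u u = 2.
Proof. by rewrite /coef eqxx /comparable_pt eqxx /b2z /= addr0. Qed.

Lemma dynkin_flip n (le : rel 'I_n) u v (U : {set 'I_n}) t :
  is_poset le -> side_ok le u v U ->
  [|| (t != u) && (t != v), (t == u) && (U == [set u]) | (t == v) && (U == [set~ v])] ->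
  dynkin_point le t -> dynkin_point (flip le u v U) t.
Proof.
move=> P S Ht [d [nz H1 H2]].
have [cuv Uu Uv _] := S.
have nuv : u != v by case/andP: cuv => /andP[].
suff [e [He Hd]] : exists e : int, (e = 1 \/ e = -1) /\
    forall j, dfS (flip le u v U) (Tvec le u v U d) j = e * dfS le d j.
  have Hee : e * e = 1 by case: He => ->.
  have Hf : forall j, dfS (flip le u v U) [ffun k => e * Tvec le u v U d k] j = dfS le d j.
    move=> j; rewrite (dfS_eqfun _ (y := fun k => e * Tvec le u v U d k)); last by move=> k; rewrite ffunE.
    by rewrite dfS_scale Hd mulrA Hee mul1r.
  exists [ffun k => e * Tvec le u v U d k]; split.
  - have [i Ti] := Tvec_nz S nz; exists i; rewrite ffunE mulf_eq0 negb_or Ti andbT.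
    by case: He => ->.
  - by rewrite Hf.
  - by move=> j jt; rewrite Hf H2.
case/or3P: Ht => [/andP[tu tv] | /andP[/eqP tu /eqP eU] | /andP[/eqP tv /eqP eU]].
- exists 1; split; first by left.
  move=> j; rewrite dfS_T // (H2 u) ?(H2 v) 1?eq_sym //; ring.
- exists (-1); split; first by right.
  subst t; move=> j; rewrite dfS_T // (H2 v) 1?eq_sym // mulr0 subr0.
  have [-> | ju] := eqVneq j u; first by rewrite Uu coef_uu /b2z; ring.
  rewrite eU in_set1 (negbTE ju) /b2z (H2 j ju); ring.
- exists (-1); split; first by right.
  subst t; move=> j; rewrite dfS_T // (H2 u) // mulr0 subr0.
  have [-> | jv] := eqVneq j v; first by rewrite Uv coef_uu /b2z; ring.
  rewrite eU in_setC1 jv /b2z (H2 j jv); ring.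
Qed.

Close Scope ring_scope.

Lemma adj_sym n (le : rel 'I_n) a b : hasse_adj le a b = hasse_adj le b a.
Proof. by rewrite /hasse_adj orbC. Qed.

Lemma terminal_uniq n (le : rel 'I_n) t a b : terminal le t ->
  hasse_adj le t a -> hasse_adj le t b -> a = b.
Proof.
move=> T ha hb; move/card_le1_eqP: T => /(_ a b).
by rewrite !inE; move=> /(_ ha hb).
Qed.

Lemma side_exists n (le : rel 'I_n) u v t : is_poset le -> hasse_acyclic le ->
  terminal le t -> covers le u v ->
  exists U, side_ok le u v U /\
   [|| (t != u) && (t != v), (t == u) && (U == [set u]) | (t == v) && (U == [set~ v])].
Proof.
move=> P Ac T cuv.
have nuv : u != v by case/andP: cuv => /andP[].
have auv : hasse_adj le u v by rewrite /hasse_adj cuv.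
have [tu | tu] := eqVneq t u.
  subst t; exists [set u]; split; last by rewrite !eqxx /= ?orbT.
  split => //; first by rewrite in_set1 eqxx.
    by rewrite in_set1 eq_sym.
  move=> a b; rewrite !in_set1 => /eqP -> _ hab; split => //.
  exact: (terminal_uniq T hab auv).
have [tv | tv] := eqVneq t v.
  subst t; exists [set~ v]; split; last by rewrite !eqxx /= ?orbT.
  split => //; first by rewrite in_setC1.
    by rewrite in_setC1 eqxx.
  move=> a b; rewrite !in_setC1 negbK => av /eqP -> hab; split => //.
  by apply: (terminal_uniq T); rewrite adj_sym.
pose e' := fun a b => hasse_adj le a b && ~~ ((a == u) && (b == v) || (a == v) && (b == u)).
exists [set a | connect e' u a]; split; last by apply/orP; left; apply/andP; split.
have vU : v \notin [set a | connect e' u a].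
  rewrite inE; apply/negP => /connectP[p pth lst].
  move: lst; case: (shortenP pth) => p' pth' un _ lst'.
  apply: Ac; exists (u :: p'); split => //.
    case: p' pth' un lst' => [|y [|z p'']] //=.
      by move=> _ _ e; move: nuv; rewrite e eqxx.
    move=> /andP[/andP[_ H] _] _ ey; subst y; move: H; by rewrite !eqxx.
  rewrite /cycle rcons_path -lst' adj_sym auv andbT.
  by apply: sub_path pth' => a b /andP[].
split => //; first by rewrite inE connect0.
move=> a b; rewrite !inE => ca cb hab.
case E: (e' a b).
  by case/negP: cb; apply: connect_trans ca (connect1 E).
move: E; rewrite /e' hab /= => /negbFE /orP[/andP[/eqP -> /eqP ->] // | /andP[/eqP ea _]].
by subst a; move: vU; rewrite inE ca.
Qed.


Lemma acyclic_ext n (le le1 : rel 'I_n) : (forall a b, hasse_adj le1 a b = hasse_adj le a b) ->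
  hasse_acyclic le -> hasse_acyclic le1.
Proof.
move=> E Ac [c [h1 h2 h3]]; apply: Ac; exists c; split => //.
by rewrite -(eq_cycle E).
Qed.

Lemma terminal_ext n (le le1 : rel 'I_n) t : (forall a b, hasse_adj le1 a b = hasse_adj le a b) ->
  terminal le t -> terminal le1 t.
Proof.
move=> E; rewrite /terminal.
have -> // : [set j | hasse_adj le1 t j] = [set j | hasse_adj le t j].
by apply/setP => j; rewrite !inE E.
Qed.

Lemma main_ind n (le' : rel 'I_n) t : is_poset le' -> forall N (le : rel 'I_n),
  #|[set p : 'I_n * 'I_n | covers le p.1 p.2 && covers le' p.2 p.1]| <= N ->
  is_poset le -> hasse_acyclic le -> terminal le t -> dynkin_point le t ->
  (forall i j, hasse_adj le' i j = hasse_adj le i j) -> dynkin_point le' t.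
Proof.
move=> P'; elim=> [|N IH] le.
  rewrite leqn0 => /eqP/card0_eq H0 P Ac T D Hadj.
  apply: (dynkin_ext _ D); apply: covers_eq_le => // x y.
  apply/idP/idP => c.
    have : hasse_adj le' x y by rewrite Hadj /hasse_adj c.
    case/orP => // c'; move: (H0 (x, y)); by rewrite !inE /= c c'.
  have : hasse_adj le x y by rewrite -Hadj /hasse_adj c.
  case/orP => // c'; move: (H0 (y, x)); by rewrite !inE /= c c'.
move=> c P Ac T D Hadj.
set S := [set p : 'I_n * 'I_n | covers le p.1 p.2 && covers le' p.2 p.1] in c.
case: (set_0Vmem S) => [S0 | [[u v] uvS]].
  by apply: (IH le) => //; rewrite -/S S0 cards0.
move: (uvS); rewrite inE /= => /andP[cuv c'vu].
have [U [SU HU]] := side_exists P Ac T cuv.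
have E := flip_adj P SU.
apply: (IH (flip le u v U)).
- rewrite -ltnS; apply: leq_trans c; rewrite (cardsD1 (u, v) S) uvS add1n ltnS.
  apply: subset_leq_card; apply/subsetP => [[x y]]; rewrite !inE /= (flip_covers P SU).
  case: ifP => [/andP[/eqP ex /eqP ey] | _].
    by subst x y => /andP[_ c']; exfalso; apply: (covers_asym P' c'vu c').
  case: ifP => // nuv /andP[cxy c'yx].
  by rewrite cxy c'yx !andbT xpair_eqE nuv.
- exact: flip_poset.
- exact: acyclic_ext Ac.
- exact: terminal_ext T.
- exact: dynkin_flip.
- by move=> i j; rewrite E Hadj.
Qed.


Theorem lemma7 (n : nat) (le le' : rel 'I_n) (t : 'I_n) :
  is_poset le -> hasse_acyclic le -> terminal le t -> dynkin_point le t ->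
  is_poset le' -> (forall i j, hasse_adj le' i j = hasse_adj le i j) ->
  dynkin_point le' t.
Proof.
move=> P Ac T D P' Hadj.
exact: (main_ind P' (leqnn _) P Ac T D Hadj).
Qed.
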